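(* Let $(r,s)\in\{0,\dots,m\}\times\{1,\dots,n\}$ and let $\mathcal{S}$ be an $(r,s)$-decomposed subspace of $\mathrm{Mat}_{m,n}(\mathbb{K})$ with the column property. Then the lower space of $\mathcal{S}$ has the column property.
   Context: Matrix spaces are equivalent ($\sim$) if $\mathcal{M}=P\mathcal{M}'Q$ with $P,Q$ invertible. A subspace is defective if none of its matrices has rank equal to its number of columns. $\mathcal{S}\subseteq\mathrm{Mat}_{m,n}(\mathbb{K})$ is $(r,s)$-decomposed ($0\le r\le m$, $1\le s\le n$) if every $M\in\mathcal{S}$ is of the form $\begin{bmatrix} ?_{r\times s}& C(M)\\ B(M)&0_{(m-r)\times(n-s)}\end{bmatrix}$ with $B(M)\in\mathrm{Mat}_{m-r,s}(\mathbb{K})$; its lower space is $B(\mathcal{S})$. $\mathcal{S}$ has the column property if for every such $(r,s)$ and every $(r,s)$-decomposed $\mathcal{S}'\sim\mathcal{S}$, the lower space of $\mathcal{S}'$ is defective. *)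

(* Defs.v *)
From HB Require Import structures.
From mathcomp Require Import all_boot all_order all_algebra.
Set Implicit Arguments.
 Unset Strict Implicit. Unset Printing Implicit Defensive.
Import Order.TTheory GRing.Theory Num.Theory.
Local Open Scope ring_scope.

Definition mxset (K : fieldType) (m n : nat) := 'M[K]_(m, n) -> Prop.

Definition is_subspace (K : fieldType) (m n : nat) (S : mxset K m n) : Prop :=
  S 0 /\ forall (a : K) (A B : 'M[K]_(m, n)), S A -> S B -> S (a *: A + B).

Definition mx_equiv (K : fieldType) (m n : nat) (S S' : mxset K m n) : Prop :=
  exists (P : 'M[K]_m) (Q : 'M[K]_n),
    P \in unitmx /\ Q \in unitmx /\
    forall A : 'M[K]_(m, n), S A <-> exists2 A' : 'M[K]_(m, n), S' A' & A = P *m A' *m Q.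

Definition defective (K : fieldType) (m n : nat) (S : mxset K m n) : Prop :=
  forall A, S A -> \rank A <> n.

Definition decomposed (K : fieldType) (m n : nat) (r s : nat) (S : mxset K m n) : Prop :=
  forall A, S A -> forall (i : 'I_m) (j : 'I_n), (r <= i)%N -> (s <= j)%N -> A i j = 0.

(* Lower space B(S) in Mat_{m-r,s}: B(M) is rows r..m-1, columns 0..s-1 of M. *)
Definition lower_space (K : fieldType) (m n : nat) (r s : nat) (S : mxset K m n)
  : mxset K (m - r) s :=
  fun B => exists2 A, S A &
    forall (i : 'I_(m - r)) (j : 'I_s) (i' : 'I_m) (j' : 'I_n),
      nat_of_ord i' = (r + i)%N -> nat_of_ord j' = nat_of_ord j -> B i j = A i' j'.

Arguments lower_space {K m n} r s S _.
Arguments decomposed {K m n} r s S.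

Definition column_property (K : fieldType) (m n : nat) (S : mxset K m n) : Prop :=
  forall (r s : nat), (r <= m)%N -> (1 <= s <= n)%N ->
  forall S' : mxset K m n, mx_equiv S' S -> decomposed r s S' ->
    defective (lower_space r s S').

(* Main.v *)
Require Import Defs.
From HB Require Import structures.
From mathcomp Require Import all_boot all_order all_algebra.
Import GRing.Theory.
Local Open Scope ring_scope.

Lemma rank_castr (K : fieldType) a b c (e : a = b) (C : 'M[K]_(a, c)) :
  \rank (castmx (e, erefl) C) = \rank C.
Proof. by case: b / e; rewrite castmx_id. Qed.

Lemma unit_block (K : fieldType) a b (X : 'M[K]_a) (Y : 'M[K]_b) :
  X \in unitmx -> Y \in unitmx -> block_mx X 0 0 Y \in unitmx.
Proof.
rewrite !unitmxE det_ublock => hX hY; exact: unitrM_comm hX hY || by rewrite unitrM hX hY.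
Qed.

Lemma blk_mul (K : fieldType) r k s l (P : 'M[K]_k) (Q : 'M[K]_s)
  (a : 'M[K]_(r, s)) (b : 'M[K]_(r, l)) (c : 'M[K]_(k, s)) :
  block_mx 1%:M 0 0 P *m block_mx a b c 0 *m block_mx Q 0 0 1%:M
  = block_mx (a *m Q) b (P *m c *m Q) 0.
Proof.
by rewrite !mulmx_block !(mul1mx, mul0mx, mulmx0, add0r, addr0, mulmx1).
Qed.

Theorem mainTheorem13 (K : fieldType) (m n r s : nat)
  (S : mxset K m n) (HS : is_subspace S)
  (Hr : (r <= m)%N) (Hs : (1 <= s <= n)%N)
  (Hdec : decomposed r s S) (Hcol : column_property S) :
  column_property (lower_space r s S).
Proof.
rewrite /lower_space.
move: (subnKC Hr); move: (m - r)%N => k Hk.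
case/andP: Hs => Hs1 Hsn.
move: (subnKC Hsn); move: (n - s)%N => l Hl.
subst m n.
move=> r' s' Hr' Hs' L' [P [Q [uP [uQ HL']]]] Hdec' C [B HB HC].
pose Pt : 'M[K]_(r + k) := block_mx 1%:M 0 0 P.
pose Qt : 'M[K]_(s + l) := block_mx Q 0 0 1%:M.
pose S' := fun X : 'M[K]_(r + k, s + l) => exists2 A, S A & X = Pt *m A *m Qt.
have dr0 : forall A, S A -> drsubmx A = 0.
  move=> A SA; apply/matrixP => i j; rewrite mxE [RHS]mxE.
  by rewrite !mxE; apply: Hdec => //=; rewrite ?leq_addr.
have LA : forall A, S A -> L' (P *m dlsubmx A *m Q).
  move=> A SA; apply/HL'; exists (dlsubmx A) => //; exists A => //.
  move=> i j i2 j2 ei ej; rewrite !mxE.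
  by congr (A _ _); apply: val_inj; rewrite /= ?ei ?ej.
have XE : forall A, S A -> Pt *m A *m Qt
    = block_mx (ulsubmx A *m Q) (ursubmx A) (P *m dlsubmx A *m Q) 0.
  move=> A SA; rewrite -{1}(submxK A) dr0 //; exact: blk_mul.
have Hrr : (r + r' <= r + k)%N by rewrite leq_add2l.
have eq1 : (r + k - (r + r') = k - r')%N by rewrite subnDl.
have := Hcol (r + r')%N s' Hrr _ S' _ _ (castmx (esym eq1, erefl) C).
rewrite rank_castr; apply.
- by case/andP: Hs' => -> /= h; apply: leq_trans h Hsn.
- exists Pt, Qt; split; first exact: unit_block (unitmx1 _ _) uP.
  split; first exact: unit_block uQ (unitmx1 _ _).
  by move=> X; split.
- move=> X [A SA ->] i j hi hj; rewrite XE //.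
  have hik : (i - r < k)%N.
    by rewrite ltn_subLR ?(leq_trans (leq_addr _ _) hi) // ltn_ord.
  have -> : i = rshift r (Ordinal hik).
    by apply: val_inj => /=; rewrite subnKC // (leq_trans (leq_addr _ _) hi).
  case: (ltnP j s) => hjs.
  + have -> : j = lshift l (Ordinal hjs) by apply: val_inj.
    rewrite block_mxEdl; apply: (Hdec' _ (LA A SA)) => //=.
    by rewrite leq_subRL ?(leq_trans (leq_addr _ _) hi).
  + have hjl : (j - s < l)%N by rewrite ltn_subLR // ltn_ord.
    have -> : j = rshift s (Ordinal hjl) by apply: val_inj => /=; rewrite subnKC.
    by rewrite block_mxEdr mxE.
- have [B0 [A SA HA] eB] := (HL' B).1 HB.
  have eB0 : B0 = dlsubmx A.
    apply/matrixP => i j; rewrite !mxE; apply: HA => //.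
  exists (Pt *m A *m Qt); first by exists A.
  move=> i j i2 j2 ei ej; rewrite castmxE /= XE //.
  have hik : (r' + i < k)%N by rewrite -ltn_subRL -eq1 ltn_ord.
  have -> : i2 = rshift r (Ordinal hik) by apply: val_inj; rewrite /= ei addnA.
  have hjs : (j < s)%N.
    by case/andP: Hs' => _ h; apply: leq_trans (ltn_ord j) h.
  have -> : j2 = lshift l (Ordinal hjs) by apply: val_inj.
  rewrite block_mxEdl -eB0 -eB; apply: HC => //.
Qed.
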